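(* Let $V$ and $W$ be subsets of normed spaces over $\mathbb{R}$ or $\mathbb{C}$ with $V$ compact, and let $T:V\to W$ be continuous. (1) There exists a pseudo-inverse $S:W\to V$ of $T$. (2) If moreover $W$ is a Hilbert space, $T$ is injective and $T(V)$ is convex, then $S:=T^{-1}\circ P_{T(V)}:W\to V$, where $P_{T(V)}$ is the metric projection onto $T(V)$ and $T^{-1}:T(V)\to V$ is the inverse of $T$ on its image, is continuous and is the unique pseudo-inverse of $T$ defined on $W$.
   Context: Let $V,W$ be subsets of normed spaces over $\mathbb{R}$ or $\mathbb{C}$ and $T:V\to W$. An operator $S:W\to V$ is a pseudo-inverse of $T$ if: (BAS) for every $w\in W$, the minimum $m_w=\min_{v\in V}\|T(v)-w\|$ is attained, the norm attains its minimum on $\{v\in V:\|T(v)-w\|=m_w\}$, and $S(w)\in\arg\min\{\|v\|:v\in V,\ \|T(v)-w\|=m_w\}$; and (MP2) $S\circ T\circ S=S$. The metric projection onto a nonempty closed convex subset of a Hilbert space maps each point to its unique nearest point in the set. *)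

(* Defs.v *)
From HB Require Import structures.
From mathcomp Require Import all_boot all_order all_algebra.
From mathcomp Require Import all_classical all_reals all_analysis.
From mathcomp Require Export complex.
Export Order.TTheory GRing.Theory Num.Theory.

Set Implicit Arguments.
Unset Strict Implicit.
Unset Printing Implicit Defensive.

Local Open Scope ring_scope.
Local Open Scope classical_set_scope.

Definition is_attained_min (K : numFieldType) (X : Type) (A : set X)
    (f : X -> K) (m : K) : Prop :=
  (exists x, A x /\ f x = m) /\ (forall x, A x -> m <= f x).

Definition pseudo_inverse (K : numFieldType) (E F : normedModType K)
    (V : set E) (W : set F) (T : E -> F) (S : F -> E) : Prop :=
  (forall w, W w -> V (S w)) /\
  (forall w, W w ->
     exists m : K,
       is_attained_min V (fun v => `|T v - w|) m /\
       (exists mn : K,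
          is_attained_min [set v | V v /\ `|T v - w| = m] (fun v => `|v|) mn) /\
       (V (S w) /\ `|T (S w) - w| = m) /\
       (forall v, V v -> `|T v - w| = m -> `|S w| <= `|v|)) /\
  (forall w, W w -> S (T (S w)) = S w).

(* [ip] is an inner product on [F] (linear in the first argument,
   [conj]-symmetric, where [conj] is the conjugation of the scalar field),
   inducing the norm of [F]. *)
Definition inner_product_for (K : numFieldType) (conj : K -> K)
    (F : normedModType K) (ip : F -> F -> K) : Prop :=
  (forall (a : K) (x y z : F), ip (a *: x + y) z = a * ip x z + ip y z) /\
  (forall x y : F, ip y x = conj (ip x y)) /\
  (forall x : F, `|x| ^+ 2 = ip x x).

Definition hilbert_space (K : numFieldType) (conj : K -> K)
    (F : completeNormedModType K) : Prop :=
  exists ip : F -> F -> K, inner_product_for conj ip.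

Definition metric_projection (K : numFieldType) (F : normedModType K)
    (C : set F) (P : F -> F) : Prop :=
  forall x, C (P x) /\ (forall y, C y -> `|x - P x| <= `|x - y|).

(* Main.v *)
Require Import Defs.
From HB Require Import structures.
From mathcomp Require Import all_boot all_order all_algebra.
From mathcomp Require Import all_classical all_reals all_analysis.
From mathcomp Require Import complex ring.
Import Order.TTheory GRing.Theory Num.Theory.
Import numFieldNormedType.Exports.
Local Open Scope ring_scope.
Local Open Scope classical_set_scope.

Lemma compact_min (K : numFieldType) (B : set K) : compact B -> B !=set0 ->
  (forall x, B x -> x \is Num.real) -> exists2 b, B b & forall c, B c -> b <= c.
Proof.
move=> cB [b0 Bb0] Breal; apply: contrapT => nomin.
have nm : forall c, B c -> exists2 d, B d & d < c.
  move=> c Bc; apply: contrapT => H; apply: nomin; exists c => // d Bd.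
  have [//|dc] := real_leP (Breal _ Bc) (Breal _ Bd).
  by exfalso; apply: H; exists d.
pose G := filter_from B (fun c => [set x | B x /\ x < c]).
have FG : Filter G.
  apply: filter_from_filter; first by exists b0.
  move=> i j Bi Bj; have [ij|ji] := real_leP (Breal _ Bi) (Breal _ Bj).
    exists i => // x [Bx xi]; split; split => //; exact: lt_le_trans ij.
  exists j => // x [Bx xj]; split; split => //; exact: lt_trans ji.
have PG : ProperFilter G.
  apply: filter_from_proper => i Bi; have [d Bd di] := nm i Bi; by exists d.
have GB : G B by exists b0 => // x [].
have [p [Bp clp]] := cB G PG GB.
have [q Bq qp] := nm p Bp.
have Gq : G [set x | B x /\ x < q] by exists q.
have nb : nbhs p (ball p (p - q)) by apply: nbhsx_ballx; rewrite subr_gt0.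
have [x [[Bx xq] bx]] := clp _ _ Gq nb.
move: bx; rewrite -ball_normE /= => bx.
have : p - x < p - q.
  apply: le_lt_trans bx; apply: real_ler_norm; apply: rpredB; exact: Breal.
rewrite ltrD2l ltrN2 => qx.
by move: (lt_trans qx xq); rewrite ltxx.
Qed.

Lemma compact_fmin (K : numFieldType) (E : topologicalType) (V : set E) (f : E -> K) :
  compact V -> V !=set0 -> {within V, continuous f} ->
  (forall x, V x -> f x \is Num.real) ->
  exists2 x, V x & forall y, V y -> f x <= f y.
Proof.
move=> cV [v0 Vv0] cf fr.
have r : forall z, (f @` V) z -> z \is Num.real by move=> _ [y Vy <-]; exact: fr.
have [b [x Vx <-] bmin] := @compact_min K _ (continuous_compact cf cV) (ex_intro _ (f v0) (imageP f Vv0)) r.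
by exists x => // y Vy; apply: bmin; exists y.
Qed.

Lemma within_comp (E F : topologicalType) (G : topologicalType) (V : set E)
  (T : E -> F) (g : F -> G) : {within V, continuous T} -> continuous g ->
  {within V, continuous (g \o T)}.
Proof.
move=> cT cg x; exact: (@continuous_comp _ _ _ (from_subspace V T) g x (cT x) (cg _)).
Qed.

Lemma compact_level (K : numFieldType) (E : topologicalType) (V : set E) (f : E -> K) (m : K) :
  compact V -> {within V, continuous f} -> compact (V `&` [set v | f v = m]).
Proof.
move=> cV cf.
have cV' : compact (V : set (subspace V)).
  by move: cV; rewrite -[V]setTI => /compact_subspaceIP; rewrite setTI.
have cl : closed ((from_subspace V f) @^-1` [set m] : set (subspace V)).
  apply: preimage_closed => //; apply: accessible_closed_set1.
  apply: hausdorff_accessible; exact: norm_hausdorff.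
have := compact_closedI cV' cl.
rewrite setIC => /compact_subspaceIP; by rewrite setIC.
Qed.

Lemma cont_dist (K : numFieldType) (F : normedModType K) (w : F) :
  continuous (fun y : F => `|y - w|).
Proof.
move=> y; apply: (@continuous_comp _ _ _ (fun y : F => y - w) Num.norm y).
  by apply: cvgB; [exact: cvg_id | exact: cvg_cst].
exact: norm_continuous.
Qed.

Lemma best_exists (K : numFieldType) (E F : normedModType K) (V : set E) (T : E -> F) :
  compact V -> V !=set0 -> {within V, continuous T} -> forall w,
  exists b, V b /\ (forall v, V v -> `|T b - w| <= `|T v - w|) /\
    (forall v, V v -> `|T v - w| = `|T b - w| -> `|b| <= `|v|).
Proof.
move=> cV V0 cT w.
have cg : {within V, continuous (fun v => `|T v - w|)}.
  exact: (@within_comp E F K V T (fun y => `|y - w|) cT (@cont_dist K F w)).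
have [b0 Vb0 b0min] := @compact_fmin K _ _ _ cV V0 cg (fun x _ => ger0_real (normr_ge0 _)).
have cA := @compact_level K _ _ _ (`|T b0 - w|) cV cg.
have A0 : (V `&` [set v | `|T v - w| = `|T b0 - w|]) !=set0 by exists b0.
have cn : {within V `&` [set v | `|T v - w| = `|T b0 - w|], continuous (fun v : E => `|v|)}.
  apply: continuous_subspaceT; exact: norm_continuous.
have [b [Vb gb] bmin] := @compact_fmin K _ _ _ cA A0 cn (fun x _ => ger0_real (normr_ge0 _)).
exists b; split => //; split.
  by move=> v Vv; rewrite gb; exact: b0min.
by move=> v Vv gv; apply: bmin; split => //=; rewrite gv gb.
Qed.

Lemma part1 (K : numFieldType) (E F : normedModType K) (V : set E) (W : set F)
  (T : E -> F) : compact V -> V !=set0 -> T @` V `<=` W -> {within V, continuous T} ->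
  exists S : F -> E, pseudo_inverse V W T S.
Proof.
move=> cV V0 TVW cT.
have [best hb] := choice (@best_exists K _ _ _ _ cV V0 cT).
have fix1 : forall u, V u -> T (best (T u)) = T u.
  move=> u Vu; have [_ [h _]] := hb (T u); have := h u Vu.
  rewrite subrr normr0 normr_le0 subr_eq0 => /eqP //.
exists (fun w => best (T (best w))).
have TS : forall w, T (best (T (best w))) = T (best w).
  by move=> w; apply: fix1; case: (hb w).
rewrite /pseudo_inverse; split; first by move=> w _ /=; case: (hb (T (best w))).
split; last by move=> w _ /=; rewrite !TS.
move=> w _; have [Vb [bmin bnorm]] := hb w.
exists `|T (best w) - w|; split.
  by split; [exists (best w) | move=> v Vv; exact: bmin].
split.
  exists `|best w|; split; first by exists (best w).
  by move=> v [Vv gv]; apply: bnorm.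
split; first by rewrite TS; split => //; case: (hb (T (best w))).
move=> v Vv gv; apply: le_trans (bnorm v Vv gv).
have [_ [_ h]] := hb (T (best w)); apply: h => //.
by rewrite TS.
Qed.

Local Open Scope convex_scope.
Section S.
Variables (K : numFieldType) (F : normedModType K).
Lemma h0 : 0 <= (2:K)^-1. Proof. by rewrite invr_ge0 ler0n. Qed.
Lemma h1 : (2:K)^-1 <= 1. Proof. by rewrite invf_le1 ?ler1n ?ltr0n. Qed.
Definition half : {i01 K} := Itv01 h0 h1.
Lemma halfE : half%:num = 2^-1. Proof. by []. Qed.
Lemma convE (x y : F) (l : {i01 K}) : (x : convex_lmodType F) <| l |> y = l%:num *: x + (1 - l%:num) *: y.
Proof. by []. Qed.
Lemma t (a b : K) : (a + b) * (a - b) = a * a - b * b.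
Proof. ring. Qed.


Lemma parallelogram (conj : K -> K) (ip : F -> F -> K) :
  inner_product_for conj ip -> (forall a b, conj (a + b) = conj a + conj b) ->
  (forall a, conj (- a) = - conj a) ->
  forall a b : F, `|a + b| ^+ 2 + `|a - b| ^+ 2 = 2 * `|a| ^+ 2 + 2 * `|b| ^+ 2.
Proof.
move=> [lin [sym nrm]] cD cN a b.
have ipD1 x y z : ip (x + y) z = ip x z + ip y z.
  by have := lin 1 x y z; rewrite scale1r mul1r.
have ip0 z : ip 0 z = 0.
  have := ipD1 0 0 z; rewrite addr0 => h.
  by apply: (addrI (ip 0 z)); rewrite addr0 -h.
have ipN x z : ip (- x) z = - ip x z.
  by have := lin (-1) x 0 z; rewrite addr0 ip0 addr0 scaleN1r mulN1r.
have ipD2 z x y : ip z (x + y) = ip z x + ip z y.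
  by rewrite sym ipD1 cD -!sym.
have ipN2 z x : ip z (- x) = - ip z x.
  by rewrite sym ipN cN -sym.
rewrite !nrm !ipD1 !ipN !ipD2 !ipN2; ring.
Qed.

Lemma nearest_unique (conj : K -> K) (ip : F -> F -> K) (C : set F) :
  inner_product_for conj ip -> (forall a b, conj (a + b) = conj a + conj b) ->
  (forall a, conj (- a) = - conj a) -> convex_set C ->
  forall x y1 y2, C y1 -> C y2 -> (forall z, C z -> `|x - y1| <= `|x - z|) ->
  `|x - y2| = `|x - y1| -> y1 = y2.
Proof.
move=> hip cD cN cC x y1 y2 Cy1 Cy2 y1min e.
pose m := (y1 : convex_lmodType F) <| half |> y2.
have Cm : C m.
  have := cC y1 y2 half; rewrite !inE => h; exact: h.
have hm : (x - y1) + (x - y2) = 2 *: (x - m).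
  rewrite /m convE halfE scalerBr scalerDr !scalerA mulrBr mulr1 divff ?pnatr_eq0 //.
  rewrite (_ : (2:K) - 1 = 1); last by ring.
  by rewrite !scale1r scaler_nat mulr2n opprD addrACA.
have hd : (x - y1) - (x - y2) = y2 - y1 by rewrite opprB addrC addrA subrK.
have P := @parallelogram conj ip hip cD cN (x - y1) (x - y2).
rewrite hm hd e normrZ ger0_norm ?ler0n // in P.
set A := `|x - m| in P; set d := `|x - y1| in P; set D := `|y2 - y1| in P.
have dA : d <= A by apply: y1min.
have d0 : 0 <= d by apply: normr_ge0.
have D2 : D ^+ 2 = 4 * (d ^+ 2 - A ^+ 2).
  have -> : D ^+ 2 = 2 * d ^+ 2 + 2 * d ^+ 2 - (2 * A) ^+ 2 by rewrite -P; ring.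
  ring.
have : D ^+ 2 <= 0.
  rewrite D2 pmulr_rle0 ?ltr0n // subr_le0 !expr2.
  by apply: ler_pM.
rewrite expr2 => h.
have : D * D == 0 by rewrite eq_le h mulr_ge0 ?normr_ge0.
by rewrite mulf_eq0 orbb normr_eq0 subr_eq0 => /eqP.
Qed.
End S.

Lemma part2 (K : numFieldType) (conj : K -> K) (E : normedModType K)
  (F : completeNormedModType K) (V : set E) (T : E -> F) :
  (forall a b, conj (a + b) = conj a + conj b) -> (forall a, conj (- a) = - conj a) ->
  compact V -> V !=set0 -> {within V, continuous T} ->
  hilbert_space conj F ->
  (forall x y, V x -> V y -> T x = T y -> x = y) ->
  convex_set (T @` V) ->
  (exists P : F -> F, metric_projection (T @` V) P) /\
  (forall (P : F -> F) (Tinv : F -> E),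
     metric_projection (T @` V) P ->
     (forall v, V v -> Tinv (T v) = v) ->
     continuous (Tinv \o P) /\
     pseudo_inverse V setT T (Tinv \o P) /\
     (forall S : F -> E, pseudo_inverse V setT T S -> S = Tinv \o P)).
Proof.
move=> cD cN cV V0 cT [ip hip] Tinj cvx.
split.
  have h : forall x, exists y, (T @` V) y /\ (forall z, (T @` V) z -> `|x - y| <= `|x - z|).
    move=> x; have [b [Vb [bmin _]]] := @best_exists K _ _ _ _ cV V0 cT x.
    exists (T b); split; first exact: imageP.
    by move=> _ [v Vv <-]; rewrite distrC [X in _ <= X]distrC; exact: bmin.
  have [P hP] := choice h; by exists P.
move=> P Tinv hP hTinv.
have SV : forall w, V (Tinv (P w)) /\ T (Tinv (P w)) = P w.
  by move=> w; have [[v Vv <-] _] := hP w; rewrite hTinv.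
have Smin : forall w v, V v -> `|w - P w| <= `|w - T v|.
  by move=> w v Vv; have [_ h] := hP w; apply: h; exact: imageP.
have uniq : forall w v, V v -> `|w - T v| = `|w - P w| -> v = Tinv (P w).
  move=> w v Vv e.
  have [CP h] := hP w.
  have := @nearest_unique K F conj ip _ hip cD cN cvx w (P w) (T v) CP (imageP T Vv) h e.
  by move=> ->; rewrite hTinv.
split.
  move=> w0 U /= hU.
  set S := Tinv \o P.
  have Uo0 : U° (S w0) by apply: nbhs_singleton; apply: nbhs_interior.
  suff : nbhs w0 [set w | U° (S w)].
    by apply: filterS => w /interior_subset.
  have [[k0 Kk0]|Kc0] := pselect ((V `&` ~` U°) !=set0); last first.
    apply: (@filterS _ _ _ setT); last exact: filterT.
    move=> w _ /=.
    apply: contrapT => nU; apply: Kc0; exists (S w); split => //.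
    exact: (SV w).1.
  have cK : compact (V `&` ~` U°).
    apply: compact_closedI cV _; apply: open_closedC; exact: open_interior.
  have cg : {within V `&` ~` U°, continuous (fun v => `|T v - w0|)}.
    apply: (@within_comp E F K _ T (fun y => `|y - w0|)); last exact: cont_dist.
    apply: continuous_subspaceW cT; exact: subIsetl.
  have [k [Vk nUk] kmin] := @compact_fmin K _ _ _ cK (ex_intro _ k0 Kk0) cg
     (fun x _ => ger0_real (normr_ge0 _)).
  set m1 := `|T k - w0|.
  set m0 := `|w0 - P w0|.
  have m01 : m0 < m1.
    rewrite lt_neqAle; apply/andP; split; last by rewrite /m1 distrC; exact: Smin.
    apply/negP => /eqP e; apply: nUk.
    have -> : k = S w0 by apply: (uniq w0 k Vk); rewrite distrC -/m1 -e.
    exact: Uo0.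
  pose e := (m1 - m0) / 2.
  have e0 : 0 < e by rewrite divr_gt0 ?ltr0n // subr_gt0.
  have me : m0 + e + e = m1 by rewrite /e; field.
  apply: (@filterS _ _ _ (ball w0 e)); last exact: nbhsx_ballx.
  move=> w; rewrite -ball_normE /= => bw.
  apply: contrapT => nU.
  have Kw : (V `&` ~` U°) (S w) by split => //; exact: (SV w).1.
  have h1 := kmin _ Kw.
  have h2 : `|T (S w) - w0| <= `|w - w0| + m0 + `|w0 - w|.
    rewrite (SV w).2.
    apply: le_trans (ler_distD w _ _) _; rewrite [X in X + _]distrC.
    rewrite addrC -addrA lerD2l; apply: le_trans (Smin w (S w0) (SV w0).1) _.
    rewrite (SV w0).2; apply: le_trans (ler_distD w0 _ _) _.
    by rewrite addrC [`|w - w0|]distrC.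
  have : m1 < m1.
    apply: le_lt_trans h1 _; apply: le_lt_trans h2 _.
    rewrite -me [`|w - w0|]distrC (addrC _ m0) -!addrA ltrD2l.
    by apply: ltrD.
  by rewrite ltxx.
split.
  rewrite /pseudo_inverse; split; first by move=> w _; exact: (SV w).1.
  split; last first.
    move=> w _ /=; rewrite (SV w).2.
    have [CP h] := hP (P w).
    have : `|P w - P (P w)| <= 0 by have := h _ (hP w).1; rewrite subrr normr0.
    by rewrite normr_le0 subr_eq0 => /eqP <-.
  move=> w _; exists `|T (Tinv (P w)) - w|; split.
    split; first by exists (Tinv (P w)); split => //; exact: (SV w).1.
    by move=> v Vv; rewrite (SV w).2 distrC [X in _ <= X]distrC; exact: Smin.
  have U2 : forall v, V v -> `|T v - w| = `|T (Tinv (P w)) - w| -> v = Tinv (P w).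
    by move=> v Vv ev; apply: uniq => //; rewrite distrC ev (SV w).2 distrC.
  split.
    exists `|Tinv (P w)|; split; first by exists (Tinv (P w)); split => //; split => //; exact: (SV w).1.
    by move=> v [Vv ev]; rewrite (U2 v Vv ev).
  split; first by split => //; exact: (SV w).1.
  by move=> v Vv ev /=; rewrite (U2 v Vv ev).
move=> S [SV' [BAS _]].
apply: funext => w /=.
have [m [[_ mmin] [_ [[VSw eSw] _]]]] := BAS w I.
apply: uniq => //.
apply: le_anti; apply/andP; split; last exact: Smin.
rewrite distrC eSw; rewrite -(SV w).2 distrC; apply: mmin; exact: (SV w).1.
Qed.

Theorem mainTheorem7 :
  (* (1), real scalars *)
  (forall (R : realType) (E F : normedModType R) (V : set E) (W : set F)
      (T : E -> F),
     compact V -> V !=set0 -> T @` V `<=` W -> {within V, continuous T} ->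
     exists S : F -> E, pseudo_inverse V W T S) /\
  (* (1), complex scalars *)
  (forall (R : realType) (E F : normedModType R[i]) (V : set E) (W : set F)
      (T : E -> F),
     compact V -> V !=set0 -> T @` V `<=` W -> {within V, continuous T} ->
     exists S : F -> E, pseudo_inverse V W T S) /\
  (* (2), real scalars: W = F is a real Hilbert space *)
  (forall (R : realType) (E : normedModType R) (F : completeNormedModType R)
      (V : set E) (T : E -> F),
     compact V -> V !=set0 -> {within V, continuous T} ->
     hilbert_space (fun x : R => x) F ->
     (forall x y, V x -> V y -> T x = T y -> x = y) ->
     convex_set (T @` V) ->
     (exists P : F -> F, metric_projection (T @` V) P) /\
     (forall (P : F -> F) (Tinv : F -> E),
        metric_projection (T @` V) P ->
        (forall v, V v -> Tinv (T v) = v) ->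
        continuous (Tinv \o P) /\
        pseudo_inverse V setT T (Tinv \o P) /\
        (forall S : F -> E, pseudo_inverse V setT T S -> S = Tinv \o P))) /\
  (* (2), complex scalars: W = F is a complex Hilbert space *)
  (forall (R : realType) (E : normedModType R[i]) (F : completeNormedModType R[i])
      (V : set E) (T : E -> F),
     compact V -> V !=set0 -> {within V, continuous T} ->
     hilbert_space (fun x : R[i] => x^*) F ->
     (forall x y, V x -> V y -> T x = T y -> x = y) ->
     convex_set (T @` V) ->
     (exists P : F -> F, metric_projection (T @` V) P) /\
     (forall (P : F -> F) (Tinv : F -> E),
        metric_projection (T @` V) P ->
        (forall v, V v -> Tinv (T v) = v) ->
        continuous (Tinv \o P) /\
        pseudo_inverse V setT T (Tinv \o P) /\
        (forall S : F -> E, pseudo_inverse V setT T S -> S = Tinv \o P))).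

Proof.
split; first by move=> R E F V W T; exact: part1.
split; first by move=> R E F V W T; exact: part1.
split.
  move=> R E F V T cV V0 cT; apply: part2 => //.
move=> R E F V T cV V0 cT; apply: part2 => //.
- by move=> a b; rewrite rmorphD.
- by move=> a; rewrite rmorphN.
Qed.
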